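(* Let $n\ge1$, $\rho\in\mathbb{R}$, and let $Q_n$ be the $(4n+3)$-dimensional quaternion Lie group with left-invariant frame $e_1,\dots,e_{4n+3}$ as described in the context. Let $g_0$ be a left-invariant metric on $Q_n$ diagonal in this frame, and let $g(t)$ be a solution of the Ricci–Bourguignon flow $\frac{\partial}{\partial t}g(t)=-2\mathrm{Ric}(g(t))+2\rho R(g(t))g(t)$, $g(0)=g_0$, by left-invariant metrics diagonal in this frame, with components $g_\alpha(t)=g(t)(e_\alpha,e_\alpha)$. Then: (a) $\frac{d}{dt}\Big(g_1(t)g_2(t)\cdots g_{4n}(t)\big(g_{4n+1}(t)g_{4n+2}(t)g_{4n+3}(t)\big)^{\frac{2(1-2n\rho)}{1+3\rho}}\Big)=0$; (b) if $\rho<0$ and $G_k(t)=\int_0^t g_k(r)\,dr$ for $k=4n+1,4n+2,4n+3$, then $\lim_{t\to+\infty}G_k(t)=+\infty$; (c) if moreover $g_j(0)=g_1(0)$ for $1\le j\le 4n$ and $g_{4n+1}(0)=g_{4n+2}(0)=g_{4n+3}(0)$, then the solution has the form $g_j(t)=g_1(0)(1+ct)^{\frac{3(1-2n\rho)}{6+2n-6n\rho}}$ for $1\le j\le 4n$, and $g_{4n+k}(t)=g_{4n+1}(0)(1+ct)^{\frac{-n(1+3\rho)}{3+n-3n\rho}}$ for $1\le k\le 3$, where $c=\frac{g_{4n+1}(0)}{g_1(0)^2}(6+2n-6n\rho)$.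
   Context: $Q_n$ is the simply connected 2-step nilpotent Lie group $\mathbb{R}^{4n}\times\mathbb{R}^3$ whose Lie algebra has basis $X_{1l},X_{2l},X_{3l},X_{4l}$ ($1\le l\le n$), $Z_1,Z_2,Z_3$, with nonzero brackets (for each $l$) $[X_{1l},X_{2l}]=-Z_1$, $[X_{1l},X_{3l}]=Z_3$, $[X_{1l},X_{4l}]=Z_2$, $[X_{2l},X_{3l}]=Z_2$, $[X_{2l},X_{4l}]=-Z_3$, $[X_{3l},X_{4l}]=-Z_1$, all other brackets between basis elements being zero (and $Z_1,Z_2,Z_3$ central). Set $e_i=X_{1i}$, $e_{n+i}=X_{2i}$, $e_{2n+i}=X_{3i}$, $e_{3n+i}=X_{4i}$ ($1\le i\le n$), $e_{4n+r}=Z_r$ ($r=1,2,3$), viewed as left-invariant vector fields. A left-invariant metric is diagonal if $g(e_\alpha,e_\beta)=0$ for $\alpha\ne\beta$. For diagonal metrics the flow is equivalent to the ODE system $g_i'=\frac{g_{4n+1}}{g_{n+i}}+\frac{g_{4n+3}}{g_{2n+i}}+\frac{g_{4n+2}}{g_{3n+i}}-\rho g_i\Sigma'$, $g_{n+i}'=\frac{g_{4n+1}}{g_i}+\frac{g_{4n+2}}{g_{2n+i}}+\frac{g_{4n+3}}{g_{3n+i}}-\rho g_{n+i}\Sigma'$, $g_{2n+i}'=\frac{g_{4n+3}}{g_i}+\frac{g_{4n+2}}{g_{n+i}}+\frac{g_{4n+1}}{g_{3n+i}}-\rho g_{2n+i}\Sigma'$, $g_{3n+i}'=\frac{g_{4n+2}}{g_i}+\frac{g_{4n+3}}{g_{n+i}}+\frac{g_{4n+1}}{g_{2n+i}}-\rho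 g_{3n+i}\Sigma'$, $g_{4n+k}'=-g_{4n+k}^2\Sigma_k-\rho g_{4n+k}\Sigma'$, where $\Sigma_1=\sum_{i=1}^n(\frac{1}{g_ig_{n+i}}+\frac{1}{g_{2n+i}g_{3n+i}})$, $\Sigma_2=\sum_{i=1}^n(\frac{1}{g_ig_{3n+i}}+\frac{1}{g_{n+i}g_{2n+i}})$, $\Sigma_3=\sum_{i=1}^n(\frac{1}{g_ig_{2n+i}}+\frac{1}{g_{n+i}g_{3n+i}})$ and $\Sigma'=\sum_{k=1}^3 g_{4n+k}\Sigma_k$ (the scalar curvature is $R=-\frac12\Sigma'$). In part (b) the solution is understood to be defined for all $t\ge0$; in part (c) the formula is understood for $t$ with $1+ct>0$. *)

(* Defs.v *)
From Stdlib Require Import Reals Lra Lia.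
From Coquelicot Require Import Coquelicot.
Open Scope R_scope.

(* A diagonal left-invariant metric on Q_n along a curve is encoded by its
   components g alpha t = g(t)(e_alpha, e_alpha), alpha = 1, ..., 4n+3
   (values of g at other indices are irrelevant). *)

Definition sum1 (n : nat) (f : nat -> R) : R := sum_n_m f 1 n.

Fixpoint prod1 (f : nat -> R) (m : nat) : R :=
  match m with
  | O => 1
  | S m' => prod1 f m' * f (S m')
  end.

Section Sig.
Variables (n : nat) (g : nat -> R -> R) (t : R).
Let X1 i := g i t.
Let X2 i := g (n + i)%nat t.
Let X3 i := g (2 * n + i)%nat t.
Let X4 i := g (3 * n + i)%nat t.
Let Z k := g (4 * n + k)%nat t.

Definition Sigma1 : R := sum1 n (fun i => / (X1 i * X2 i) + / (X3 i * X4 i)).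
Definition Sigma2 : R := sum1 n (fun i => / (X1 i * X4 i) + / (X2 i * X3 i)).
Definition Sigma3 : R := sum1 n (fun i => / (X1 i * X3 i) + / (X2 i * X4 i)).
Definition Sigmap : R := Z 1%nat * Sigma1 + Z 2%nat * Sigma2 + Z 3%nat * Sigma3.
End Sig.

(* The ODE system (equivalent to the Ricci-Bourguignon flow for diagonal
   left-invariant metrics on Q_n) holds at time t. *)
Definition QnRB_ODE (n : nat) (rho : R) (g : nat -> R -> R) (t : R) : Prop :=
  let X1 i := g i t in
  let X2 i := g (n + i)%nat t in
  let X3 i := g (2 * n + i)%nat t in
  let X4 i := g (3 * n + i)%nat t in
  let Z k := g (4 * n + k)%nat t in
  let S' := Sigmap n g t in
  (forall i : nat, (1 <= i <= n)%nat ->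
     is_derive (g i) t
       (Z 1%nat / X2 i + Z 3%nat / X3 i + Z 2%nat / X4 i - rho * X1 i * S') /\
     is_derive (g (n + i)%nat) t
       (Z 1%nat / X1 i + Z 2%nat / X3 i + Z 3%nat / X4 i - rho * X2 i * S') /\
     is_derive (g (2 * n + i)%nat) t
       (Z 3%nat / X1 i + Z 2%nat / X2 i + Z 1%nat / X4 i - rho * X3 i * S') /\
     is_derive (g (3 * n + i)%nat) t
       (Z 2%nat / X1 i + Z 3%nat / X2 i + Z 1%nat / X3 i - rho * X4 i * S')) /\
  is_derive (g (4 * n + 1)%nat) t
    (- (Z 1%nat) ^ 2 * Sigma1 n g t - rho * Z 1%nat * S') /\
  is_derive (g (4 * n + 2)%nat) t
    (- (Z 2%nat) ^ 2 * Sigma2 n g t - rho * Z 2%nat * S') /\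
  is_derive (g (4 * n + 3)%nat) t
    (- (Z 3%nat) ^ 2 * Sigma3 n g t - rho * Z 3%nat * S').

(* g is a solution of the flow on the time interval [0, T) by diagonal
   left-invariant metrics: all components positive on [0,T), continuous
   from the right at 0 (so that g(0) is the initial metric), and the ODE
   system holds for 0 < t < T. *)
Definition QnRB_solution (n : nat) (rho : R) (T : Rbar)
    (g : nat -> R -> R) : Prop :=
  (forall (a : nat) (t : R), (1 <= a <= 4 * n + 3)%nat -> 0 <= t ->
      Rbar_lt t T -> 0 < g a t) /\
  (forall a : nat, (1 <= a <= 4 * n + 3)%nat ->
      filterlim (g a) (at_right 0) (locally (g a 0))) /\
  (forall t : R, 0 < t -> Rbar_lt t T -> QnRB_ODE n rho g t).

Definition QnRB_invariant (n : nat) (rho : R) (g : nat -> R -> R) (t : R) : R :=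
  prod1 (fun a => g a t) (4 * n) *
  Rpower (g (4 * n + 1)%nat t * g (4 * n + 2)%nat t * g (4 * n + 3)%nat t)
         (2 * (1 - 2 * INR n * rho) / (1 + 3 * rho)).

(* Main.v *)
Require Import Defs.
From Stdlib Require Import Reals Lra Lia.
From Coquelicot Require Import Coquelicot.
Open Scope R_scope.

Definition S1 (f : nat -> R) (m : nat) : R := sum_n_m f 1 m.

Lemma S1_0 f : S1 f 0 = 0.
Proof. unfold S1; rewrite sum_n_m_zero; [reflexivity|lia]. Qed.

Lemma S1_S f m : S1 f (S m) = S1 f m + f (S m).
Proof. unfold S1; rewrite sum_n_Sm; [reflexivity|lia]. Qed.

Lemma S1_ext f g m : (forall i, (1 <= i <= m)%nat -> f i = g i) -> S1 f m = S1 g m.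
Proof. intros H; unfold S1; apply sum_n_m_ext_loc; auto. Qed.

Lemma S1_le f g m : (forall i, (1 <= i <= m)%nat -> f i <= g i) -> S1 f m <= S1 g m.
Proof.
  induction m; intros H. rewrite !S1_0; lra.
  rewrite !S1_S. assert (f (S m) <= g (S m)) by (apply H; lia).
  assert (S1 f m <= S1 g m) by (apply IHm; intros; apply H; lia). lra.
Qed.

Lemma S1_nonneg f m : (forall i, (1 <= i <= m)%nat -> 0 <= f i) -> 0 <= S1 f m.
Proof.
  intros H. replace 0 with (S1 (fun _ => 0) m). apply S1_le; auto.
  induction m. apply S1_0. rewrite S1_S, IHm; [lra|intros; apply H; lia].
Qed.

Lemma S1_term f m a : (forall i, (1 <= i <= m)%nat -> 0 <= f i) -> (1 <= a <= m)%nat -> f a <= S1 f m.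
Proof.
  induction m; intros H Ha. lia.
  rewrite S1_S. destruct (Nat.eq_dec a (S m)).
  - subst. assert (0 <= S1 f m) by (apply S1_nonneg; intros; apply H; lia). lra.
  - assert (f a <= S1 f m) by (apply IHm; [intros; apply H; lia| lia]).
    assert (0 <= f (S m)) by (apply H; lia). lra.
Qed.

Lemma S1_lin (u v w : nat -> R) al be ga de m :
  S1 (fun i => al * u i + be * v i + ga * w i + de) m =
  al * S1 u m + be * S1 v m + ga * S1 w m + INR m * de.
Proof.
  induction m. rewrite !S1_0; simpl; ring.
  rewrite !S1_S, IHm, S_INR; ring.
Qed.

Lemma S1_const c m : S1 (fun _ => c) m = INR m * c.
Proof. induction m. rewrite S1_0; simpl; ring. rewrite S1_S, IHm, S_INR; ring. Qed.

Lemma S1_plus f g m : S1 (fun i => f i + g i) m = S1 f m + S1 g m.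
Proof. induction m. rewrite !S1_0; ring. rewrite !S1_S, IHm; ring. Qed.

Lemma S1_shift f k m : S1 (fun j => f (k + j)%nat) m = sum_n_m f (S k) (k + m).
Proof.
  induction m. rewrite S1_0, sum_n_m_zero; [reflexivity|lia].
  rewrite S1_S, IHm. replace (k + S m)%nat with (S (k + m)) by lia.
  rewrite sum_n_Sm; [reflexivity|lia].
Qed.

Definition inbox (N : nat) (m M : R) (y : nat -> R) :=
  forall b, (1 <= b <= N)%nat -> m <= y b <= M.
Definition Qd (N : nat) (y w : nat -> R) := S1 (fun b => (y b - w b) ^ 2) N.

Lemma Qd_nonneg N y w : 0 <= Qd N y w.
Proof. apply S1_nonneg; intros; apply pow2_ge_0. Qed.

Definition Good (N : nat) (f : (nat -> R) -> R) :=
  forall m M, 0 < m -> exists B L, 0 <= L /\ forall y w, inbox N m M y -> inbox N m M w ->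
     Rabs (f y) <= B /\ (f y - f w) ^ 2 <= L * Qd N y w.

Lemma Good_ext N f g : Good N f -> (forall y, f y = g y) -> Good N g.
Proof.
  intros H E m M Hm. destruct (H m M Hm) as (B & L & HL & HH).
  exists B, L; split; auto. intros y w Hy Hw. rewrite <- !E. auto.
Qed.

Lemma Good_const N c : Good N (fun _ => c).
Proof.
  intros m M Hm. exists (Rabs c), 0. split; [lra|]. intros y w _ _. split; [lra|].
  pose proof (Qd_nonneg N y w). replace (c - c) with 0 by ring. nra.
Qed.

Lemma Good_proj N b : (1 <= b <= N)%nat -> Good N (fun y => y b).
Proof.
  intros Hb m M Hm. exists (Rabs m + Rabs M), 1. split; [lra|]. intros y w Hy Hw. split.
  - destruct (Hy b Hb). unfold Rabs; repeat destruct Rcase_abs; lra.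
  - rewrite Rmult_1_l. unfold Qd.
    apply (S1_term (fun b0 => (y b0 - w b0) ^ 2)); auto. intros; apply pow2_ge_0.
Qed.

Lemma Good_invproj N b : (1 <= b <= N)%nat -> Good N (fun y => / y b).
Proof.
  intros Hb m M Hm. exists (/ m), (/ m ^ 4). split.
  { apply Rlt_le, Rinv_0_lt_compat; apply pow_lt; lra. }
  intros y w Hy Hw. destruct (Hy b Hb), (Hw b Hb). split.
  - rewrite Rabs_pos_eq. apply Rinv_le_contravar; lra.
    apply Rlt_le, Rinv_0_lt_compat; lra.
  - assert (Hq : (y b - w b) ^ 2 <= Qd N y w).
    { apply (S1_term (fun b0 => (y b0 - w b0) ^ 2)); auto. intros; apply pow2_ge_0. }
    replace (/ y b - / w b) with ((w b - y b) * / (y b * w b)) by (field; lra).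
    assert (0 < / (y b * w b) <= / (m * m)).
    { split. apply Rinv_0_lt_compat; nra. apply Rinv_le_contravar; nra. }
    replace (/ m ^ 4) with (/ (m * m) * / (m * m)) by (field; lra).
    replace (((w b - y b) * / (y b * w b)) ^ 2) with ((w b - y b) ^ 2 * (/ (y b * w b) * / (y b * w b))) by ring.
    replace ((w b - y b) ^ 2) with ((y b - w b) ^ 2) by ring.
    set (q := (y b - w b) ^ 2) in *. set (r := / (y b * w b)) in *. set (s := / (m * m)) in *.
    assert (0 <= q) by (unfold q; apply pow2_ge_0).
    assert (r * r <= s * s) by (apply Rmult_le_compat; lra).
    apply Rle_trans with (q * (s * s)). apply Rmult_le_compat_l; lra.
    rewrite Rmult_comm. apply Rmult_le_compat_l; [|lra]. apply Rmult_le_pos; lra.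
Qed.

Lemma Good_plus N f g : Good N f -> Good N g -> Good N (fun y => f y + g y).
Proof.
  intros Hf Hg m M Hm. destruct (Hf m M Hm) as (B1 & L1 & HL1 & H1).
  destruct (Hg m M Hm) as (B2 & L2 & HL2 & H2).
  exists (B1 + B2), (2 * L1 + 2 * L2). split; [lra|]. intros y w Hy Hw.
  destruct (H1 y w Hy Hw), (H2 y w Hy Hw). split.
  - eapply Rle_trans; [apply Rabs_triang|lra].
  - pose proof (Qd_nonneg N y w).
    set (a := f y - f w) in *. set (b := g y - g w) in *.
    replace (f y + g y - (f w + g w)) with (a + b) by (unfold a, b; ring).
    assert ((a + b) ^ 2 <= 2 * a ^ 2 + 2 * b ^ 2). { pose proof (pow2_ge_0 (a - b)). replace ((a+b)^2) with (2 * a ^ 2 + 2 * b ^ 2 - (a-b)^2) by ring. lra. } lra.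
Qed.

Lemma Good_opp N f : Good N f -> Good N (fun y => - f y).
Proof.
  intros Hf m M Hm. destruct (Hf m M Hm) as (B1 & L1 & HL1 & H1).
  exists B1, L1. split; auto. intros y w Hy Hw. destruct (H1 y w Hy Hw). split.
  - rewrite Rabs_Ropp; auto.
  - replace (- f y - - f w) with (- (f y - f w)) by ring. nra.
Qed.

Lemma Good_minus N f g : Good N f -> Good N g -> Good N (fun y => f y - g y).
Proof. intros; apply Good_plus; auto; apply Good_opp; auto. Qed.

Lemma sq_le_abs x B : Rabs x <= B -> x ^ 2 <= B ^ 2.
Proof.
  intros H. pose proof (Rabs_pos x).
  rewrite <- (Rabs_pos_eq (x ^ 2)) by apply pow2_ge_0. rewrite <- RPow_abs.
  apply pow_incr; lra.
Qed.

Lemma Good_mult N f g : Good N f -> Good N g -> Good N (fun y => f y * g y).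
Proof.
  intros Hf Hg m M Hm. destruct (Hf m M Hm) as (B1 & L1 & HL1 & H1).
  destruct (Hg m M Hm) as (B2 & L2 & HL2 & H2).
  exists (B1 * B2), (2 * B1 ^ 2 * L2 + 2 * B2 ^ 2 * L1). split.
  { assert (0 <= B1 ^ 2) by nra. assert (0 <= B2 ^ 2) by nra. nra. }
  intros y w Hy Hw.
  destruct (H1 y w Hy Hw) as [Ay Dy]. destruct (H2 y w Hy Hw) as [Ay' Dy'].
  destruct (H1 w y Hw Hy) as [Aw _]. destruct (H2 w y Hw Hy) as [Aw' _]. split.
  - rewrite Rabs_mult. apply Rmult_le_compat; auto; apply Rabs_pos.
  - pose proof (Qd_nonneg N y w).
    replace (f y * g y - f w * g w) with (f y * (g y - g w) + g w * (f y - f w)) by ring.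
    set (a := f y - f w) in *. set (b := g y - g w) in *.
    assert (E1 : (f y) ^ 2 <= B1 ^ 2).
    { apply sq_le_abs; auto. }
    assert (E2 : (g w) ^ 2 <= B2 ^ 2).
    { apply sq_le_abs; auto. }
    assert (Hs : (f y * b + g w * a) ^ 2 <= 2 * ((f y) ^ 2 * b ^ 2) + 2 * ((g w) ^ 2 * a ^ 2)).
    { pose proof (pow2_ge_0 (f y * b - g w * a)).
      replace ((f y * b + g w * a) ^ 2) with (2 * ((f y) ^ 2 * b ^ 2) + 2 * ((g w) ^ 2 * a ^ 2) - (f y * b - g w * a) ^ 2) by ring. lra. }
    pose proof (pow2_ge_0 a). pose proof (pow2_ge_0 b).
    pose proof (pow2_ge_0 (f y)). pose proof (pow2_ge_0 (g w)).
    assert ((f y) ^ 2 * b ^ 2 <= B1 ^ 2 * (L2 * Qd N y w)).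
    { apply Rmult_le_compat; auto. }
    assert ((g w) ^ 2 * a ^ 2 <= B2 ^ 2 * (L1 * Qd N y w)).
    { apply Rmult_le_compat; auto. }
    replace ((2 * B1 ^ 2 * L2 + 2 * B2 ^ 2 * L1) * Qd N y w) with
      (2 * (B1 ^ 2 * (L2 * Qd N y w)) + 2 * (B2 ^ 2 * (L1 * Qd N y w))) by ring.
    lra.
Qed.

Lemma Good_sum N (h : nat -> (nat -> R) -> R) k :
  (forall i, (1 <= i <= k)%nat -> Good N (h i)) ->
  Good N (fun y => sum_n_m (fun i => h i y) 1 k).
Proof.
  induction k; intros H.
  - eapply Good_ext; [apply (Good_const N 0)|]. intros y; symmetry; apply (S1_0 (fun i => h i y)).
  - eapply Good_ext; [apply Good_plus; [apply IHk; intros; apply H; lia | apply (H (S k)); lia]|].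
    intros y. symmetry. apply (S1_S (fun i => h i y)).
Qed.

Section SecB.
Implicit Types (f g : R -> R) (x l : R).

Lemma D_eq f x l l' : is_derive f x l -> l = l' -> is_derive f x l'.
Proof. intros H ->; auto. Qed.

Lemma D_plus f g x a b : is_derive f x a -> is_derive g x b -> is_derive (fun s => f s + g s) x (a + b).
Proof. intros; apply (is_derive_plus f g); auto. Qed.
Lemma D_opp f x a : is_derive f x a -> is_derive (fun s => - f s) x (- a).
Proof. intros; apply (is_derive_opp f); auto. Qed.
Lemma D_minus f g x a b : is_derive f x a -> is_derive g x b -> is_derive (fun s => f s - g s) x (a - b).
Proof. intros; apply D_plus; auto; apply D_opp; auto. Qed.
Lemma D_mult f g x a b : is_derive f x a -> is_derive g x b -> is_derive (fun s => f s * g s) x (a * g x + f x * b).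
Proof. intros; apply (is_derive_mult f g); auto. intros; apply Rmult_comm. Qed.
Lemma D_const c x : is_derive (fun _ => c) x 0.
Proof. apply (is_derive_const c). Qed.
Lemma D_id x : is_derive (fun s => s) x 1.
Proof. apply (is_derive_id x). Qed.
Lemma D_sq f x a : is_derive f x a -> is_derive (fun s => f s ^ 2) x (2 * f x * a).
Proof.
  intros H. apply (is_derive_ext (fun s => f s * f s)); [intros; simpl; ring|].
  eapply D_eq. apply D_mult; eauto. ring.
Qed.
Lemma D_exp f x a : is_derive f x a -> is_derive (fun s => exp (f s)) x (a * exp (f x)).
Proof. intros H. apply (is_derive_comp exp f). apply is_derive_exp. auto. Qed.
Lemma D_ln f x a : is_derive f x a -> 0 < f x -> is_derive (fun s => ln (f s)) x (a * / f x).
Proof.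
  intros H Hp. apply (is_derive_comp ln f); auto. apply is_derive_Reals, derivable_pt_lim_ln; auto.
Qed.
Lemma D_inv f x a : is_derive f x a -> f x <> 0 -> is_derive (fun s => / f s) x (- a / f x ^ 2).
Proof. intros; apply is_derive_inv; auto. Qed.

Lemma D_cont f x l : is_derive f x l -> continuity_pt f x.
Proof.
  intros H. apply continuity_pt_filterlim. apply (ex_derive_continuous f x). exists l; auto.
Qed.

Lemma D_S1 (f : nat -> R -> R) (d : nat -> R) x m :
  (forall a, (1 <= a <= m)%nat -> is_derive (f a) x (d a)) ->
  is_derive (fun s => S1 (fun a => f a s) m) x (S1 d m).
Proof.
  induction m; intros H.
  - apply (is_derive_ext (fun _ => 0)). intros; rewrite S1_0; auto. rewrite S1_0. apply D_const.
  - apply (is_derive_ext (fun s => S1 (fun a => f a s) m + f (S m) s)). intros; rewrite S1_S; auto.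
    rewrite S1_S. apply D_plus. apply IHm; intros; apply H; lia. apply H; lia.
Qed.

Lemma C_S1 (f : nat -> R -> R) x m :
  (forall a, (1 <= a <= m)%nat -> continuity_pt (f a) x) ->
  continuity_pt (fun s => S1 (fun a => f a s) m) x.
Proof.
  induction m; intros H.
  - apply (continuity_pt_ext (fun _ => 0)). intros; rewrite S1_0; auto. apply continuity_pt_const. intros u v; auto.
  - apply (continuity_pt_ext (fun s => S1 (fun a => f a s) m + f (S m) s)). intros; rewrite S1_S; auto.
    apply (continuity_pt_plus (fun s => S1 (fun a => f a s) m) (f (S m))). apply IHm; intros; apply H; lia. apply H; lia.
Qed.

Lemma mono_up f a b : a <= b -> (forall x, a <= x <= b -> continuity_pt f x) ->
  (forall x, a < x < b -> exists l, is_derive f x l /\ 0 <= l) -> f a <= f b.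
Proof.
  intros Hab Hc Hd.
  destruct (MVT_gen f a b (fun x => Rmax 0 (Derive f x))) as (c & Hc1 & Hc2).
  - intros x Hx. rewrite Rmin_left, Rmax_right in Hx by lra.
    destruct (Hd x Hx) as (l & Hl & Hl0). rewrite (is_derive_unique f x l Hl).
    rewrite Rmax_right; auto.
  - intros x Hx. rewrite Rmin_left, Rmax_right in Hx by lra. auto.
  - pose proof (Rmax_l 0 (Derive f c)). nra.
Qed.

Definition ext0 (f : R -> R) := fun s => f (Rmax 0 s).

Lemma ext0_pos f s : 0 <= s -> ext0 f s = f s.
Proof. intros; unfold ext0; rewrite Rmax_right; auto. Qed.

Lemma ext0_cont0 f : filterlim f (at_right 0) (locally (f 0)) -> continuity_pt (ext0 f) 0.
Proof.
  intros H. apply continuity_pt_filterlim. unfold ext0 at 2. rewrite Rmax_left by lra.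
  apply filterlim_locally. intros eps. apply filterlim_locally with (eps := eps) in H.
  destruct H as [del Hd]. exists del. intros y Hy. unfold ext0.
  destruct (Rle_or_lt y 0).
  - rewrite Rmax_left by lra. apply ball_center.
  - rewrite Rmax_right by lra. apply Hd; auto.
Qed.

Lemma ext0_D f x l : 0 < x -> is_derive f x l -> is_derive (ext0 f) x l.
Proof.
  intros Hx H. apply (is_derive_ext_loc f). 
  assert (Hd : 0 < x / 2) by lra. exists (mkposreal _ Hd). intros y Hy.
  unfold ball in Hy; simpl in Hy; unfold AbsRing_ball, abs, minus, plus, opp in Hy; simpl in Hy.
  unfold ext0. rewrite Rmax_right; auto. apply Rabs_def2 in Hy. lra. auto.
Qed.

Lemma ext0_C f x : 0 < x -> continuity_pt f x -> continuity_pt (ext0 f) x.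
Proof.
  intros Hx H. apply continuity_pt_filterlim. apply continuity_pt_filterlim in H.
  unfold ext0 at 2. rewrite Rmax_right by lra.
  eapply filterlim_ext_loc; [|exact H].
  assert (Hd : 0 < x / 2) by lra. exists (mkposreal _ Hd). intros y Hy.
  unfold ball in Hy; simpl in Hy; unfold AbsRing_ball, abs, minus, plus, opp in Hy; simpl in Hy.
  unfold ext0. rewrite Rmax_right; auto. apply Rabs_def2 in Hy. lra.
Qed.

End SecB.

Lemma Cmult (f g : R -> R) x : continuity_pt f x -> continuity_pt g x -> continuity_pt (fun s => f s * g s) x.
Proof. intros; exact (continuity_pt_mult f g x H H0). Qed.
Lemma Cminus (f g : R -> R) x : continuity_pt f x -> continuity_pt g x -> continuity_pt (fun s => f s - g s) x.
Proof. intros; exact (continuity_pt_minus f g x H H0). Qed.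
Lemma Copp (f : R -> R) x : continuity_pt f x -> continuity_pt (fun s => - f s) x.
Proof. intros; exact (continuity_pt_opp f x H). Qed.

Lemma bound1 (f : R -> R) t1 : 0 <= t1 -> (forall s, 0 <= s <= t1 -> continuity_pt f s) ->
  (forall s, 0 <= s <= t1 -> 0 < f s) ->
  exists m M, 0 < m /\ forall s, 0 <= s <= t1 -> m <= f s <= M.
Proof.
  intros Ht Hc Hp.
  destruct (continuity_ab_min f 0 t1 Ht Hc) as (a & Ha & Ha').
  destruct (continuity_ab_maj f 0 t1 Ht Hc) as (b & Hb & Hb').
  exists (f a), (f b). split; auto.
Qed.

Lemma boundN (y : nat -> R -> R) N t1 : 0 <= t1 ->
  (forall a s, (1 <= a <= N)%nat -> 0 <= s <= t1 -> continuity_pt (y a) s /\ 0 < y a s) ->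
  exists m M, 0 < m /\ forall a s, (1 <= a <= N)%nat -> 0 <= s <= t1 -> m <= y a s <= M.
Proof.
  intros Ht. induction N; intros H.
  - exists 1, 1. split; [lra|]. intros; lia.
  - destruct IHN as (m & M & Hm & HH). intros; apply H; auto; lia.
    destruct (bound1 (y (S N)) t1 Ht) as (m1 & M1 & Hm1 & H1).
    intros; apply H; auto; lia. intros; apply H; auto; lia.
    exists (Rmin m m1), (Rmax M M1). split. apply Rmin_pos; auto.
    intros a s Ha Hs. destruct (Nat.eq_dec a (S N)).
    + subst. destruct (H1 s Hs). split. eapply Rle_trans; [apply Rmin_r|auto].
      eapply Rle_trans; [eauto|apply Rmax_r].
    + destruct (HH a s ltac:(lia) Hs). split. eapply Rle_trans; [apply Rmin_l|auto].
      eapply Rle_trans; [eauto|apply Rmax_l].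
Qed.

Lemma finL (P : nat -> R -> Prop) N : (forall b L L', P b L -> L <= L' -> P b L') ->
  (forall b, (1 <= b <= N)%nat -> exists L, 0 <= L /\ P b L) ->
  exists L, 0 <= L /\ forall b, (1 <= b <= N)%nat -> P b L.
Proof.
  intros Hm. induction N; intros H.
  - exists 0; split; [lra|]; intros; lia.
  - destruct IHN as (L & HL & HH). intros; apply H; lia.
    destruct (H (S N)) as (L1 & HL1 & H1). lia.
    exists (L + L1). split; [lra|]. intros b Hb. destruct (Nat.eq_dec b (S N)).
    + subst. eapply Hm; eauto; lra.
    + eapply Hm; [apply HH; lia|lra].
Qed.

Lemma uniq N (F : nat -> (nat -> R) -> R) (y w : nat -> R -> R) t1 :
  0 < t1 ->
  (forall a, (1 <= a <= N)%nat -> Good N (F a)) ->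
  (forall a s, (1 <= a <= N)%nat -> 0 <= s <= t1 -> 0 < y a s /\ 0 < w a s) ->
  (forall a s, (1 <= a <= N)%nat -> 0 <= s <= t1 -> continuity_pt (y a) s /\ continuity_pt (w a) s) ->
  (forall a s, (1 <= a <= N)%nat -> 0 < s < t1 ->
     is_derive (y a) s (F a (fun b => y b s)) /\ is_derive (w a) s (F a (fun b => w b s))) ->
  (forall a, (1 <= a <= N)%nat -> y a 0 = w a 0) ->
  forall a, (1 <= a <= N)%nat -> y a t1 = w a t1.
Proof.
  intros Ht HG Hp Hc Hd H0.
  destruct (boundN y N t1) as (my & My & Hmy & Hby). lra.
  { intros a s Ha Hs; split; [apply Hc|apply Hp]; auto. }
  destruct (boundN w N t1) as (mw & Mw & Hmw & Hbw). lra.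
  { intros a s Ha Hs; split; [apply Hc|apply Hp]; auto. }
  set (m := Rmin my mw). set (M := Rmax My Mw).
  assert (Hm : 0 < m) by (apply Rmin_pos; auto).
  assert (Hiny : forall s, 0 <= s <= t1 -> inbox N m M (fun b => y b s)).
  { intros s Hs b Hb. destruct (Hby b s Hb Hs). split.
    eapply Rle_trans; [apply Rmin_l|auto]. eapply Rle_trans; [eauto|apply Rmax_l]. }
  assert (Hinw : forall s, 0 <= s <= t1 -> inbox N m M (fun b => w b s)).
  { intros s Hs b Hb. destruct (Hbw b s Hb Hs). split.
    eapply Rle_trans; [apply Rmin_r|auto]. eapply Rle_trans; [eauto|apply Rmax_r]. }
  destruct (finL (fun b L => forall yy ww, inbox N m M yy -> inbox N m M ww ->
     (F b yy - F b ww) ^ 2 <= L * Qd N yy ww) N) as (L & HL & HLb).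
  { intros b L L' HP HLL yy ww Hy Hw. eapply Rle_trans; [apply HP; auto|].
    apply Rmult_le_compat_r; auto. apply Qd_nonneg. }
  { intros b Hb. destruct (HG b Hb m M Hm) as (B & L & HL & HH).
    exists L; split; auto. intros; apply HH; auto. }
  set (K := 1 + INR N * L).
  set (V := fun s => S1 (fun b => (y b s - w b s) ^ 2) N).
  set (W := fun s => V s * exp (- K * s)).
  assert (HV0 : V 0 = 0).
  { unfold V. rewrite (S1_ext _ (fun _ => 0)). rewrite S1_const; ring.
    intros i Hi. rewrite H0; auto. ring. }
  assert (HVnn : forall s, 0 <= V s).
  { intros s. apply S1_nonneg. intros; apply pow2_ge_0. }
  assert (Hmono : (fun s => - W s) 0 <= (fun s => - W s) t1).
  { apply (mono_up (fun s => - W s) 0 t1). lra.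
    - intros x Hx. apply Copp. apply Cmult.
      + apply C_S1. intros b Hb. apply (continuity_pt_ext (fun s => (y b s - w b s) * (y b s - w b s))); [intros; ring|]. apply (Cmult (fun s => y b s - w b s) (fun s => y b s - w b s) x);
        apply Cminus; apply Hc; auto.
      + eapply D_cont. apply (D_exp (fun s => - K * s)). apply (is_derive_scal (fun s => s) x (- K) 1). apply D_id.
    - intros x Hx. assert (Hx' : 0 <= x <= t1) by lra.
      set (yy := fun b => y b x). set (ww := fun b => w b x).
      set (DV := S1 (fun b => 2 * (y b x - w b x) * (F b yy - F b ww)) N).
      assert (HDV : is_derive V x DV).
      { unfold V, DV. apply (D_S1 (fun b s => (y b s - w b s) ^ 2)).
        intros b Hb. apply (D_sq (fun s => y b s - w b s)). apply D_minus; apply Hd; auto. }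
      assert (HB : DV <= K * V x).
      { unfold DV, K. 
        apply Rle_trans with (S1 (fun b => (y b x - w b x) ^ 2 + L * V x) N).
        - apply S1_le. intros b Hb.
          assert (E : (F b yy - F b ww) ^ 2 <= L * V x) by (apply HLb; [auto|apply Hiny; lra|apply Hinw; lra]).
          pose proof (pow2_ge_0 (y b x - w b x - (F b yy - F b ww))).
          replace (2 * (y b x - w b x) * (F b yy - F b ww)) with
            ((y b x - w b x) ^ 2 + (F b yy - F b ww) ^ 2 - (y b x - w b x - (F b yy - F b ww)) ^ 2) by ring.
          lra.
        - rewrite S1_plus, S1_const. unfold V. right; ring. }
      exists (- (DV * exp (- K * x) + V x * (- K * 1 * exp (- K * x)))). split.
      + unfold W. apply D_opp. apply (D_mult V (fun s => exp (- K * s))); auto. apply (D_exp (fun s => - K * s)).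
        apply (is_derive_scal (fun s => s) x (- K) 1). apply D_id.
      + pose proof (exp_pos (- K * x)). 
        replace (- (DV * exp (- K * x) + V x * (- K * 1 * exp (- K * x)))) with
          ((K * V x - DV) * exp (- K * x)) by ring.
        apply Rmult_le_pos; lra. }
  simpl in Hmono. unfold W in Hmono. rewrite HV0 in Hmono.
  assert (HW : V t1 * exp (- K * t1) <= 0) by lra.
  assert (HVt : V t1 <= 0).
  { pose proof (exp_pos (- K * t1)). destruct (Rle_or_lt (V t1) 0); auto.
    assert (0 < V t1 * exp (- K * t1)) by (apply Rmult_lt_0_compat; auto). lra. }
  intros a Ha.
  assert (Ht1 : (y a t1 - w a t1) ^ 2 <= V t1).
  { unfold V. apply (S1_term (fun b => (y b t1 - w b t1) ^ 2)); auto. intros; apply pow2_ge_0. }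
  assert ((y a t1 - w a t1) ^ 2 = 0) by (pose proof (pow2_ge_0 (y a t1 - w a t1)); lra).
  assert (y a t1 - w a t1 = 0) by nra. lra.
Qed.

Definition Fq (n : nat) (rho : R) (a : nat) (y : nat -> R) : R :=
  let gg := fun b (_ : R) => y b in
  let S' := Sigmap n gg 0 in
  let Z k := y (4 * n + k)%nat in
  if (a <=? n)%nat then
    Z 1%nat / y (n + a)%nat + Z 3%nat / y (2 * n + a)%nat + Z 2%nat / y (3 * n + a)%nat - rho * y a * S'
  else if (a <=? 2 * n)%nat then
    Z 1%nat / y (a - n)%nat + Z 2%nat / y (2 * n + (a - n))%nat + Z 3%nat / y (3 * n + (a - n))%nat - rho * y (n + (a - n))%nat * S'
  else if (a <=? 3 * n)%nat then
    Z 3%nat / y (a - 2 * n)%nat + Z 2%nat / y (n + (a - 2 * n))%nat + Z 1%nat / y (3 * n + (a - 2 * n))%nat - rho * y (2 * n + (a - 2 * n))%nat * S'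
  else if (a <=? 4 * n)%nat then
    Z 2%nat / y (a - 3 * n)%nat + Z 3%nat / y (n + (a - 3 * n))%nat + Z 1%nat / y (2 * n + (a - 3 * n))%nat - rho * y (3 * n + (a - 3 * n))%nat * S'
  else if (a =? 4 * n + 1)%nat then
    - (Z 1%nat) ^ 2 * Sigma1 n gg 0 - rho * Z 1%nat * S'
  else if (a =? 4 * n + 2)%nat then
    - (Z 2%nat) ^ 2 * Sigma2 n gg 0 - rho * Z 2%nat * S'
  else
    - (Z 3%nat) ^ 2 * Sigma3 n gg 0 - rho * Z 3%nat * S'.

Definition Sp (n : nat) (y : nat -> R) := Sigmap n (fun b _ => y b) 0.
Definition Sg1 (n : nat) (y : nat -> R) := Sigma1 n (fun b _ => y b) 0.
Definition Sg2 (n : nat) (y : nat -> R) := Sigma2 n (fun b _ => y b) 0.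
Definition Sg3 (n : nat) (y : nat -> R) := Sigma3 n (fun b _ => y b) 0.

Lemma Fq_1 n rho i y : (1 <= i <= n)%nat -> Fq n rho i y =
  y (4 * n + 1)%nat / y (n + i)%nat + y (4 * n + 3)%nat / y (2 * n + i)%nat + y (4 * n + 2)%nat / y (3 * n + i)%nat - rho * y i * Sp n y.
Proof. intros H. unfold Fq. rewrite (proj2 (Nat.leb_le i n)) by lia. reflexivity. Qed.

Lemma Fq_2 n rho i y : (1 <= i <= n)%nat -> Fq n rho (n + i) y =
  y (4 * n + 1)%nat / y i + y (4 * n + 2)%nat / y (2 * n + i)%nat + y (4 * n + 3)%nat / y (3 * n + i)%nat - rho * y (n + i)%nat * Sp n y.
Proof.
  intros H. unfold Fq. rewrite (proj2 (Nat.leb_gt (n + i) n)) by lia.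
  rewrite (proj2 (Nat.leb_le (n + i) (2 * n))) by lia.
  replace (n + i - n)%nat with i by lia. reflexivity.
Qed.

Lemma Fq_3 n rho i y : (1 <= i <= n)%nat -> Fq n rho (2 * n + i) y =
  y (4 * n + 3)%nat / y i + y (4 * n + 2)%nat / y (n + i)%nat + y (4 * n + 1)%nat / y (3 * n + i)%nat - rho * y (2 * n + i)%nat * Sp n y.
Proof.
  intros H. unfold Fq. rewrite (proj2 (Nat.leb_gt (2 * n + i) n)) by lia.
  rewrite (proj2 (Nat.leb_gt (2 * n + i) (2 * n))) by lia.
  rewrite (proj2 (Nat.leb_le (2 * n + i) (3 * n))) by lia.
  replace (2 * n + i - 2 * n)%nat with i by lia. reflexivity.
Qed.

Lemma Fq_4 n rho i y : (1 <= i <= n)%nat -> Fq n rho (3 * n + i) y =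
  y (4 * n + 2)%nat / y i + y (4 * n + 3)%nat / y (n + i)%nat + y (4 * n + 1)%nat / y (2 * n + i)%nat - rho * y (3 * n + i)%nat * Sp n y.
Proof.
  intros H. unfold Fq. rewrite (proj2 (Nat.leb_gt (3 * n + i) n)) by lia.
  rewrite (proj2 (Nat.leb_gt (3 * n + i) (2 * n))) by lia.
  rewrite (proj2 (Nat.leb_gt (3 * n + i) (3 * n))) by lia.
  rewrite (proj2 (Nat.leb_le (3 * n + i) (4 * n))) by lia.
  replace (3 * n + i - 3 * n)%nat with i by lia. reflexivity.
Qed.

Lemma Fq_5 n rho y : Fq n rho (4 * n + 1) y =
  - (y (4 * n + 1)%nat) ^ 2 * Sg1 n y - rho * y (4 * n + 1)%nat * Sp n y.
Proof.
  unfold Fq. rewrite (proj2 (Nat.leb_gt (4 * n + 1) n)) by lia.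
  rewrite (proj2 (Nat.leb_gt (4 * n + 1) (2 * n))) by lia.
  rewrite (proj2 (Nat.leb_gt (4 * n + 1) (3 * n))) by lia.
  rewrite (proj2 (Nat.leb_gt (4 * n + 1) (4 * n))) by lia.
  rewrite Nat.eqb_refl. reflexivity.
Qed.

Lemma Fq_6 n rho y : Fq n rho (4 * n + 2) y =
  - (y (4 * n + 2)%nat) ^ 2 * Sg2 n y - rho * y (4 * n + 2)%nat * Sp n y.
Proof.
  unfold Fq. rewrite (proj2 (Nat.leb_gt (4 * n + 2) n)) by lia.
  rewrite (proj2 (Nat.leb_gt (4 * n + 2) (2 * n))) by lia.
  rewrite (proj2 (Nat.leb_gt (4 * n + 2) (3 * n))) by lia.
  rewrite (proj2 (Nat.leb_gt (4 * n + 2) (4 * n))) by lia.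
  rewrite (proj2 (Nat.eqb_neq (4 * n + 2) (4 * n + 1))) by lia.
  rewrite Nat.eqb_refl. reflexivity.
Qed.

Lemma Fq_7 n rho y : Fq n rho (4 * n + 3) y =
  - (y (4 * n + 3)%nat) ^ 2 * Sg3 n y - rho * y (4 * n + 3)%nat * Sp n y.
Proof.
  unfold Fq. rewrite (proj2 (Nat.leb_gt (4 * n + 3) n)) by lia.
  rewrite (proj2 (Nat.leb_gt (4 * n + 3) (2 * n))) by lia.
  rewrite (proj2 (Nat.leb_gt (4 * n + 3) (3 * n))) by lia.
  rewrite (proj2 (Nat.leb_gt (4 * n + 3) (4 * n))) by lia.
  rewrite (proj2 (Nat.eqb_neq (4 * n + 3) (4 * n + 1))) by lia.
  rewrite (proj2 (Nat.eqb_neq (4 * n + 3) (4 * n + 2))) by lia.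
  reflexivity.
Qed.

Lemma idx_cases n a : (1 <= a <= 4 * n + 3)%nat ->
  (1 <= a <= n)%nat \/
  (exists i, (1 <= i <= n)%nat /\ a = (n + i)%nat) \/
  (exists i, (1 <= i <= n)%nat /\ a = (2 * n + i)%nat) \/
  (exists i, (1 <= i <= n)%nat /\ a = (3 * n + i)%nat) \/
  a = (4 * n + 1)%nat \/ a = (4 * n + 2)%nat \/ a = (4 * n + 3)%nat.
Proof.
  intros H.
  destruct (Compare_dec.le_lt_dec a n). left; lia. right.
  destruct (Compare_dec.le_lt_dec a (2 * n)). left; exists (a - n)%nat; lia. right.
  destruct (Compare_dec.le_lt_dec a (3 * n)). left; exists (a - 2 * n)%nat; lia. right.
  destruct (Compare_dec.le_lt_dec a (4 * n)). left; exists (a - 3 * n)%nat; lia. right.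
  lia.
Qed.

Lemma ODE_F n rho g t : QnRB_ODE n rho g t ->
  forall a, (1 <= a <= 4 * n + 3)%nat -> is_derive (g a) t (Fq n rho a (fun b => g b t)).
Proof.
  intros (H1 & H5 & H6 & H7) a Ha.
  destruct (idx_cases n a Ha) as [Hi|[(i & Hi & ->)|[(i & Hi & ->)|[(i & Hi & ->)|[->|[->| ->]]]]]].
  - rewrite Fq_1 by auto. apply (H1 a Hi).
  - rewrite Fq_2 by auto. apply (H1 i Hi).
  - rewrite Fq_3 by auto. apply (H1 i Hi).
  - rewrite Fq_4 by auto. apply (H1 i Hi).
  - rewrite Fq_5. apply H5.
  - rewrite Fq_6. apply H6.
  - rewrite Fq_7. apply H7.
Qed.

Lemma Good_pow2 N f : Good N f -> Good N (fun y => f y ^ 2).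
Proof. intros H. apply (Good_ext N (fun y => f y * f y)). apply (Good_mult N f f); auto. intros; simpl; ring. Qed.

Lemma Good_invmul N i j : (1 <= i <= N)%nat -> (1 <= j <= N)%nat -> Good N (fun y => / (y i * y j)).
Proof.
  intros. apply (Good_ext N (fun y => / y i * / y j)). apply Good_mult; apply Good_invproj; auto.
  intros; rewrite Rinv_mult; auto.
Qed.

Ltac good := repeat first [apply Good_const | apply Good_plus | apply Good_minus | apply Good_mult | apply Good_opp
  | apply Good_pow2 | apply Good_invmul; lia | apply Good_proj; lia | apply Good_invproj; lia ].

Lemma Good_Sg1 n : Good (4 * n + 3) (Sg1 n).
Proof. unfold Sg1, Sigma1, sum1. apply Good_sum. intros i Hi. good. Qed.
Lemma Good_Sg2 n : Good (4 * n + 3) (Sg2 n).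
Proof. unfold Sg2, Sigma2, sum1. apply Good_sum. intros i Hi. good. Qed.
Lemma Good_Sg3 n : Good (4 * n + 3) (Sg3 n).
Proof. unfold Sg3, Sigma3, sum1. apply Good_sum. intros i Hi. good. Qed.
Lemma Good_Sp n : Good (4 * n + 3) (Sp n).
Proof.
  eapply Good_ext with (f := fun y => y (4 * n + 1)%nat * Sg1 n y + y (4 * n + 2)%nat * Sg2 n y + y (4 * n + 3)%nat * Sg3 n y).
  2: reflexivity.
  apply Good_plus; [apply Good_plus|]; apply Good_mult; try (apply Good_proj; lia);
  auto using Good_Sg1, Good_Sg2, Good_Sg3.
Qed.

Ltac good2 := repeat first [apply Good_const | apply Good_Sp | apply Good_Sg1 | apply Good_Sg2 | apply Good_Sg3
  | apply Good_plus | apply Good_minus | apply Good_mult | apply Good_opp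
  | apply Good_pow2 | apply Good_proj; lia | apply Good_invproj; lia ].

Lemma Good_F n rho a : (1 <= a <= 4 * n + 3)%nat -> Good (4 * n + 3) (Fq n rho a).
Proof.
  intros Ha.
  destruct (idx_cases n a Ha) as [Hi|[(i & Hi & ->)|[(i & Hi & ->)|[(i & Hi & ->)|[->|[->| ->]]]]]].
  - eapply Good_ext; [|intros y; symmetry; apply Fq_1; auto]. unfold Rdiv. good2.
  - eapply Good_ext; [|intros y; symmetry; apply Fq_2; auto]. unfold Rdiv. good2.
  - eapply Good_ext; [|intros y; symmetry; apply Fq_3; auto]. unfold Rdiv. good2.
  - eapply Good_ext; [|intros y; symmetry; apply Fq_4; auto]. unfold Rdiv. good2.
  - eapply Good_ext; [|intros y; symmetry; apply Fq_5; auto]. good2.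
  - eapply Good_ext; [|intros y; symmetry; apply Fq_6; auto]. good2.
  - eapply Good_ext; [|intros y; symmetry; apply Fq_7; auto]. good2.
Qed.

Lemma Sp_unfold n y : Sp n y = y (4 * n + 1)%nat * Sg1 n y + y (4 * n + 2)%nat * Sg2 n y + y (4 * n + 3)%nat * Sg3 n y.
Proof. reflexivity. Qed.

Lemma sum1_const n (f : nat -> R) c : (forall i, (1 <= i <= n)%nat -> f i = c) -> sum1 n f = INR n * c.
Proof.
  intros H. unfold sum1. rewrite (sum_n_m_ext_loc _ (fun _ => c)) by auto.
  rewrite sum_n_m_const. replace (S n - 1)%nat with n by lia. reflexivity.
Qed.

Lemma Sg1_sym n y X : (forall b, (1 <= b <= 4 * n)%nat -> y b = X) -> Sg1 n y = INR n * (2 * / (X * X)).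
Proof.
  intros H. unfold Sg1, Sigma1. apply sum1_const. intros i Hi. rewrite !H by lia. ring.
Qed.
Lemma Sg2_sym n y X : (forall b, (1 <= b <= 4 * n)%nat -> y b = X) -> Sg2 n y = INR n * (2 * / (X * X)).
Proof.
  intros H. unfold Sg2, Sigma2. apply sum1_const. intros i Hi. rewrite !H by lia. ring.
Qed.
Lemma Sg3_sym n y X : (forall b, (1 <= b <= 4 * n)%nat -> y b = X) -> Sg3 n y = INR n * (2 * / (X * X)).
Proof.
  intros H. unfold Sg3, Sigma3. apply sum1_const. intros i Hi. rewrite !H by lia. ring.
Qed.

Definition ghat (n : nat) (X0 Z0 c pa pb : R) (b : nat) (s : R) : R :=
  if (b <=? 4 * n)%nat then X0 * Rpower (1 + c * s) pa else Z0 * Rpower (1 + c * s) pb.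

Lemma ghat_X n X0 Z0 c pa pb b s : (b <= 4 * n)%nat -> ghat n X0 Z0 c pa pb b s = X0 * Rpower (1 + c * s) pa.
Proof. intros; unfold ghat; rewrite (proj2 (Nat.leb_le _ _)) by lia; auto. Qed.
Lemma ghat_Z n X0 Z0 c pa pb b s : (4 * n < b)%nat -> ghat n X0 Z0 c pa pb b s = Z0 * Rpower (1 + c * s) pb.
Proof. intros; unfold ghat; rewrite (proj2 (Nat.leb_gt _ _)) by lia; auto. Qed.

Lemma D_Rpow c p X0 s : 0 < 1 + c * s ->
  is_derive (fun s => X0 * Rpower (1 + c * s) p) s (X0 * (p * (c * / (1 + c * s)) * Rpower (1 + c * s) p)).
Proof.
  intros Hu. unfold Rpower. apply is_derive_scal.
  apply (D_exp (fun s => p * ln (1 + c * s))).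
  eapply D_eq. apply is_derive_scal. apply (D_ln (fun s => 1 + c * s)); auto.
  apply (D_plus (fun _ => 1) (fun s => c * s)). apply D_const. apply (is_derive_scal (fun s => s)). apply D_id.
  ring.
Qed.

Section Hat.
Variables (n : nat) (rho X0 Z0 : R).
Hypothesis Hn : (1 <= n)%nat.
Hypothesis HX0 : 0 < X0.
Hypothesis HZ0 : 0 < Z0.
Let Dn := 6 + 2 * INR n - 6 * INR n * rho.
Hypothesis HD : Dn <> 0.
Let c := Z0 / X0 ^ 2 * Dn.
Let pa := 3 * (1 - 2 * INR n * rho) / (6 + 2 * INR n - 6 * INR n * rho).
Let pb := - INR n * (1 + 3 * rho) / (3 + INR n - 3 * INR n * rho).

Lemma hat_deriv s : 0 < 1 + c * s -> forall a, (1 <= a <= 4 * n + 3)%nat ->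
  is_derive (ghat n X0 Z0 c pa pb a) s (Fq n rho a (fun b => ghat n X0 Z0 c pa pb b s)).
Proof.
  intros Hu a Ha.
  assert (Hnr : 0 < 3 + INR n - 3 * INR n * rho \/ 3 + INR n - 3 * INR n * rho < 0).
  { destruct (Rtotal_order (3 + INR n - 3 * INR n * rho) 0) as [h|[h|h]]; auto.
    exfalso; apply HD; unfold Dn; lra. }
  assert (Hnr' : 3 + INR n - 3 * INR n * rho <> 0) by (destruct Hnr; lra).
  assert (Ec : c = Z0 / X0 ^ 2 * Dn) by reflexivity.
  assert (Ea : pa = 3 * (1 - 2 * INR n * rho) / Dn) by reflexivity.
  assert (Eb : pb = - INR n * (1 + 3 * rho) / (Dn / 2)).
  { unfold pb, Dn. field. split; auto. }
  assert (ED : Dn = 6 + 2 * INR n - 6 * INR n * rho) by reflexivity.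
  clearbody pa pb c. clearbody Dn.
  set (u := 1 + c * s) in *. set (P := Rpower u pa). set (Q := Rpower u pb).
  assert (HP : 0 < P) by apply exp_pos.
  assert (Hu0 : u <> 0) by lra.
  assert (HQ : Q = P * P * / u).
  { assert (Hpb : pb = pa + pa - 1).
    { rewrite Ea, Eb, ED. rewrite ED in HD. field. auto. }
    unfold Q, P, Rpower. rewrite Hpb.
    replace ((pa + pa - 1) * ln u) with (pa * ln u + pa * ln u + - ln u) by ring.
    rewrite !exp_plus, exp_Ropp, exp_ln by auto. reflexivity. }
  set (y := fun b => ghat n X0 Z0 c pa pb b s).
  assert (HyX : forall b, (1 <= b <= 4 * n)%nat -> y b = X0 * P).
  { intros; unfold y; rewrite ghat_X; auto; lia. }
  assert (HyZ : forall b, (4 * n < b)%nat -> y b = Z0 * Q).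
  { intros; unfold y; rewrite ghat_Z; auto. }
  assert (HSp : Sp n y = 3 * Z0 * Q * (INR n * (2 * / (X0 * P * (X0 * P))))).
  { rewrite Sp_unfold, (Sg1_sym n y (X0 * P)), (Sg2_sym n y (X0 * P)), (Sg3_sym n y (X0 * P)) by auto.
    rewrite !HyZ by lia. ring. }
  destruct (idx_cases n a Ha) as [Hi|[(i & Hi & ->)|[(i & Hi & ->)|[(i & Hi & ->)|[->|[->| ->]]]]]].
  1,2,3,4:
    (apply (is_derive_ext (fun s => X0 * Rpower (1 + c * s) pa));
     [intros; symmetry; apply ghat_X; lia|]);
    eapply D_eq; [apply D_Rpow; auto|].
  1: rewrite Fq_1 by auto.
  2: rewrite Fq_2 by auto.
  3: rewrite Fq_3 by auto.
  4: rewrite Fq_4 by auto.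
  all: try (rewrite (HyZ (4 * n + 1)%nat) by lia; rewrite (HyZ (4 * n + 2)%nat) by lia; rewrite (HyZ (4 * n + 3)%nat) by lia).
  1: (try rewrite (HyX a) by lia); (try rewrite (HyX (n + a)%nat) by lia); (try rewrite (HyX (2 * n + a)%nat) by lia); (try rewrite (HyX (3 * n + a)%nat) by lia).
  2,3,4: (try rewrite (HyX i) by lia); (try rewrite (HyX (n + i)%nat) by lia); (try rewrite (HyX (2 * n + i)%nat) by lia); (try rewrite (HyX (3 * n + i)%nat) by lia).
  1,2,3,4: fold u P; rewrite HSp; rewrite HQ, Ec, Ea; field; repeat split; auto; lra.
  1: rewrite Fq_5. 2: rewrite Fq_6. 3: rewrite Fq_7.
  all: (apply (is_derive_ext (fun s => Z0 * Rpower (1 + c * s) pb));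
     [intros; symmetry; apply ghat_Z; lia|]);
    eapply D_eq; [apply D_Rpow; auto|].
  all: fold u Q; rewrite Sp_unfold.
  all: rewrite (Sg1_sym n y (X0 * P)) by auto.
  all: rewrite (Sg2_sym n y (X0 * P)) by auto.
  all: rewrite (Sg3_sym n y (X0 * P)) by auto.
  all: rewrite !HyZ by lia; rewrite HQ, Ec, Eb.
  all: field; repeat split; auto; lra.
Qed.
End Hat.

Lemma Rbar_lt_trans' s t (T : Rbar) : s <= t -> Rbar_lt t T -> Rbar_lt s T.
Proof. intros H1 H2. destruct T; simpl in *; auto; lra. Qed.

Lemma Rpower_at1 p : Rpower 1 p = 1.
Proof. unfold Rpower. rewrite ln_1, Rmult_0_r, exp_0. reflexivity. Qed.

Lemma part_c (n : nat) (rho : R) (T : Rbar) (g : nat -> R -> R) :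
  (1 <= n)%nat -> QnRB_solution n rho T g ->
  (6 + 2 * INR n - 6 * INR n * rho <> 0 ->
   (forall j : nat, (1 <= j <= 4 * n)%nat -> g j 0 = g 1%nat 0) ->
   g (4 * n + 2)%nat 0 = g (4 * n + 1)%nat 0 ->
   g (4 * n + 3)%nat 0 = g (4 * n + 1)%nat 0 ->
   let c := g (4 * n + 1)%nat 0 / (g 1%nat 0) ^ 2
            * (6 + 2 * INR n - 6 * INR n * rho) in
   forall t : R, 0 <= t -> Rbar_lt t T -> 0 < 1 + c * t ->
     (forall j : nat, (1 <= j <= 4 * n)%nat ->
        g j t = g 1%nat 0 * Rpower (1 + c * t)
          (3 * (1 - 2 * INR n * rho) / (6 + 2 * INR n - 6 * INR n * rho))) /\
     (forall k : nat, (1 <= k <= 3)%nat ->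
        g (4 * n + k)%nat t = g (4 * n + 1)%nat 0 * Rpower (1 + c * t)
          (- INR n * (1 + 3 * rho) / (3 + INR n - 3 * INR n * rho)))).
Proof.
  intros Hn (Hpos & Hrc & Hode) HD Hj H2 H3 c t Ht HtT Hct.
  set (X0 := g 1%nat 0) in *. set (Z0 := g (4 * n + 1)%nat 0) in *.
  set (pa := 3 * (1 - 2 * INR n * rho) / (6 + 2 * INR n - 6 * INR n * rho)).
  set (pb := - INR n * (1 + 3 * rho) / (3 + INR n - 3 * INR n * rho)).
  assert (HX0 : 0 < X0) by (apply Hpos; [lia|lra|eapply Rbar_lt_trans'; eauto]).
  assert (HZ0 : 0 < Z0) by (apply Hpos; [lia|lra|eapply Rbar_lt_trans'; eauto]).
  assert (Hinit : forall a, (1 <= a <= 4 * n + 3)%nat -> g a 0 = ghat n X0 Z0 c pa pb a 0).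
  { intros a Ha. unfold ghat. replace (1 + c * 0) with 1 by ring. rewrite !Rpower_at1, !Rmult_1_r.
    destruct (Nat.leb_spec a (4 * n)). apply Hj; lia.
    assert (a = 4 * n + 1 \/ a = 4 * n + 2 \/ a = 4 * n + 3)%nat as [->|[->| ->]] by lia; auto. }
  assert (Hmain : forall a, (1 <= a <= 4 * n + 3)%nat -> g a t = ghat n X0 Z0 c pa pb a t).
  { destruct (Rle_lt_or_eq_dec 0 t Ht) as [Htp| <-]; [|exact Hinit].
    intros a Ha. rewrite <- (ext0_pos (g a) t) by lra.
    assert (Hus : forall s, 0 <= s <= t -> 0 < 1 + c * s).
    { intros s Hs. destruct (Rle_or_lt 0 c). nra. nra. }
    assert (Hsl : forall s, 0 <= s <= t -> Rbar_lt s T) by (intros s Hs; eapply Rbar_lt_trans'; [|eauto]; lra).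
    apply (uniq (4 * n + 3) (Fq n rho) (fun a => ext0 (g a)) (ghat n X0 Z0 c pa pb) t Htp); [| | | | |exact Ha].
    - intros; apply Good_F; auto.
    - intros b s Hb Hs. split.
      + rewrite ext0_pos by lra. apply Hpos; auto; lra.
      + unfold ghat. destruct (b <=? 4 * n)%nat; apply Rmult_lt_0_compat; auto; apply exp_pos.
    - intros b s Hb Hs. split.
      + destruct (Rle_lt_or_eq_dec 0 s (proj1 Hs)) as [Hs0| <-].
        * apply ext0_C; [lra|]. eapply D_cont. apply ODE_F; [apply Hode; [lra| apply Hsl; lra] | lia].
        * apply ext0_cont0. apply Hrc; auto.
      + eapply D_cont. apply hat_deriv; auto.
    - intros b s Hb Hs. split.
      + replace (Fq n rho b (fun b0 => ext0 (g b0) s)) with (Fq n rho b (fun b0 => g b0 s)).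
        apply ext0_D; [lra|]. apply ODE_F; [|lia]. apply Hode; [lra|]. apply Hsl; lra.
        unfold ext0; rewrite Rmax_right; [reflexivity|lra].
      + apply hat_deriv; auto. apply Hus; lra.
    - intros b Hb. rewrite ext0_pos by lra. apply Hinit; auto. }
  split.
  - intros j Hj'. rewrite Hmain by lia. apply ghat_X; lia.
  - intros k Hk. rewrite Hmain by lia. apply ghat_Z; lia.
Qed.

Lemma cont_ext0 (Z : R -> R) s : 0 <= s -> filterlim Z (at_right 0) (locally (Z 0)) ->
  (forall r, 0 < r -> ex_derive Z r) -> continuity_pt (ext0 Z) s.
Proof.
  intros Hs Hrc Hd. destruct (Rle_lt_or_eq_dec 0 s Hs) as [H| <-].
  - apply ext0_C; auto. destruct (Hd s H) as [l Hl]. eapply D_cont; eauto.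
  - apply ext0_cont0; auto.
Qed.

Lemma intZ (Z Sig Sp : R -> R) rho C : rho < 0 -> 0 <= C ->
  (forall s, 0 <= s -> 0 < Z s) -> filterlim Z (at_right 0) (locally (Z 0)) ->
  (forall s, 0 < s -> is_derive Z s (- (Z s) ^ 2 * Sig s - rho * Z s * Sp s)) ->
  (forall s, 0 < s -> 0 <= Sig s <= C /\ Z s * Sig s <= Sp s) ->
  is_lim (fun t => RInt Z 0 t) p_infty p_infty.
Proof.
  intros Hr HC Hpos Hrc Hd HS.
  set (A := / Z 0). assert (HA : 0 < A) by (apply Rinv_0_lt_compat, Hpos; lra).
  set (K := Rabs (1 + rho) * C + 1).
  assert (HK : 0 < K) by (unfold K; pose proof (Rabs_pos (1 + rho)); nra).
  assert (Hex : forall r, 0 < r -> ex_derive Z r) by (intros r Hr0; eexists; apply Hd; auto).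
  assert (HC0 : forall s, 0 <= s -> continuity_pt (ext0 Z) s) by (intros; apply cont_ext0; auto).
  assert (LB : forall s, 0 < s -> / (A + K * s) <= Z s).
  { intros s Hs.
    assert (Hm : (fun r => K * r - / ext0 Z r) 0 <= (fun r => K * r - / ext0 Z r) s).
    { apply (mono_up (fun r => K * r - / ext0 Z r)). lra.
      - intros x Hx. apply Cminus.
        + eapply D_cont. apply (is_derive_scal (fun r => r)). apply D_id.
        + apply (continuity_pt_inv (ext0 Z)). apply HC0; lra.
          rewrite ext0_pos by lra. apply Rgt_not_eq, Hpos; lra.
      - intros x Hx. assert (Zx : 0 < Z x) by (apply Hpos; lra).
        eexists. split.
        + apply D_minus. apply (is_derive_scal (fun r => r)). apply D_id.
          apply D_inv. apply ext0_D. lra. apply Hd. lra. rewrite ext0_pos by lra. lra.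
        + rewrite ext0_pos by lra. destruct (HS x ltac:(lra)) as [[S0 S1'] S2].
          assert (E : K * 1 - - (- Z x ^ 2 * Sig x - rho * Z x * Sp x) / Z x ^ 2
                   = K - Sig x + (- rho) * (Sp x / Z x)) by (field; lra).
          rewrite E.
          assert (Sig x <= Sp x / Z x).
          { apply (Rmult_le_reg_l (Z x)); auto. field_simplify; [lra|lra]. }
          assert ((1 + rho) * Sig x <= Rabs (1 + rho) * C).
          { apply Rle_trans with (Rabs (1 + rho) * Sig x).
            apply Rmult_le_compat_r; auto. apply Rle_abs.
            apply Rmult_le_compat_l; auto. apply Rabs_pos. }
          assert ((- rho) * Sig x <= (- rho) * (Sp x / Z x)) by (apply Rmult_le_compat_l; lra).
          unfold K. lra. }
    simpl in Hm. rewrite !ext0_pos in Hm by lra. fold A in Hm.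
    assert (Zs : 0 < Z s) by (apply Hpos; lra).
    assert (/ Z s <= A + K * s) by lra.
    rewrite <- (Rinv_inv (Z s)). apply Rinv_le_contravar; auto. apply Rinv_0_lt_compat; auto. }
  assert (Hint : forall t, 0 < t -> (/ K) * (ln (A + K * t) - ln A) <= RInt Z 0 t).
  { intros t Ht.
    assert (Hg : forall s, 0 <= s -> 0 < A + K * s) by (intros; nra).
    assert (HI : is_RInt (fun s => / (A + K * s)) 0 t ((/ K) * ln (A + K * t) - (/ K) * ln (A + K * 0))).
    { apply (is_RInt_derive (fun s => / K * ln (A + K * s))).
      - intros x Hx. rewrite Rmin_left, Rmax_right in Hx by lra.
        eapply D_eq. apply is_derive_scal. apply (D_ln (fun s => A + K * s)).
        apply (D_plus (fun _ => A) (fun s => K * s)). apply D_const. apply (is_derive_scal (fun s => s)). apply D_id.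
        apply Hg; lra. field. split; try lra. apply Rgt_not_eq, Hg; lra.
      - intros x Hx. rewrite Rmin_left, Rmax_right in Hx by lra.
        apply continuity_pt_filterlim. eapply D_cont. apply (D_inv (fun s => A + K * s)).
        apply (D_plus (fun _ => A) (fun s => K * s)). apply D_const. apply (is_derive_scal (fun s => s)). apply D_id.
        apply Rgt_not_eq, Hg; lra. }
    pose proof (is_RInt_unique (V := R_CompleteNormedModule) _ _ _ _ HI) as HI2. clear HI. rename HI2 into HI. replace (A + K * 0) with A in HI by ring.
    replace (/ K * (ln (A + K * t) - ln A)) with (RInt (fun s => / (A + K * s)) 0 t) by (rewrite HI; simpl; ring).
    apply RInt_le. lra.
    - apply (ex_RInt_continuous (V := R_CompleteNormedModule)). intros z Hz. rewrite Rmin_left, Rmax_right in Hz by lra.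
      apply continuity_pt_filterlim. eapply D_cont. apply (D_inv (fun s => A + K * s)).
      apply (D_plus (fun _ => A) (fun s => K * s)). apply D_const. apply (is_derive_scal (fun s => s)). apply D_id.
      apply Rgt_not_eq, Hg; lra.
    - apply (ex_RInt_ext (ext0 Z)). intros x Hx. rewrite Rmin_left, Rmax_right in Hx by lra.
      apply ext0_pos; lra.
      apply (ex_RInt_continuous (V := R_CompleteNormedModule)). intros z Hz. rewrite Rmin_left, Rmax_right in Hz by lra.
      apply continuity_pt_filterlim. apply HC0; lra.
    - intros x Hx. apply LB; lra. }
  apply is_lim_spec. intros M. simpl.
  exists (Rmax 1 (exp (K * M + ln A) / K)). intros t Ht.
  assert (Ht1 : 1 <= Rmax 1 (exp (K * M + ln A) / K)) by apply Rmax_l.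
  assert (Ht2 : exp (K * M + ln A) / K <= Rmax 1 (exp (K * M + ln A) / K)) by apply Rmax_r.
  eapply Rlt_le_trans; [|apply Hint; lra].
  assert (exp (K * M + ln A) < A + K * t).
  { assert (exp (K * M + ln A) / K < t) by lra.
    apply (Rmult_lt_compat_l K) in H; auto. field_simplify in H; lra. }
  apply ln_increasing in H; [|apply exp_pos]. rewrite ln_exp in H.
  apply (Rmult_lt_reg_l K); auto. field_simplify; lra.
Qed.

Lemma prod_deriv (g : nat -> R -> R) (d : nat -> R) t m :
  (forall a, (1 <= a <= m)%nat -> is_derive (g a) t (d a) /\ 0 < g a t) ->
  is_derive (fun s => prod1 (fun a => g a s) m) t (prod1 (fun a => g a t) m * S1 (fun a => d a / g a t) m).
Proof.
  induction m; intros H.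
  - simpl. eapply D_eq; [apply D_const|]. rewrite S1_0; ring.
  - cbn [prod1]. eapply D_eq.
    apply (D_mult (fun s => prod1 (fun a => g a s) m) (g (S m))). apply IHm; intros; apply H; lia. apply H; lia.
    rewrite S1_S. destruct (H (S m)) as [_ Hp]; [lia|]. field. lra.
Qed.

Lemma logsum n rho y : (forall b, (1 <= b <= 4 * n + 3)%nat -> 0 < y b) ->
  S1 (fun a => Fq n rho a y / y a) (4 * n) = (2 - 4 * INR n * rho) * Sp n y.
Proof.
  intros Hy. set (f := fun a => Fq n rho a y / y a).
  assert (E : S1 f (4 * n) = S1 f n + S1 (fun j => f (n + j)%nat) n + S1 (fun j => f (2 * n + j)%nat) n
                 + S1 (fun j => f (3 * n + j)%nat) n).
  { rewrite !S1_shift. unfold S1.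
    rewrite (sum_n_m_Chasles f 1 n (4 * n)) by lia.
    rewrite (sum_n_m_Chasles f (S n) (n + n) (4 * n)) by lia.
    rewrite (sum_n_m_Chasles f (S (n + n)) (2 * n + n) (4 * n)) by lia.
    replace (n + n)%nat with (2 * n)%nat by lia.
    replace (2 * n + n)%nat with (3 * n)%nat by lia.
    replace (3 * n + n)%nat with (4 * n)%nat by lia.
    unfold plus; simpl. ring. }
  rewrite E. rewrite <- !S1_plus.
  set (Sp0 := Sp n y).
  set (Z1 := y (4 * n + 1)%nat). set (Z2 := y (4 * n + 2)%nat). set (Z3 := y (4 * n + 3)%nat).
  rewrite (S1_ext _ (fun i => (2 * Z1) * (/ (y i * y (n + i)%nat) + / (y (2 * n + i)%nat * y (3 * n + i)%nat))
     + (2 * Z2) * (/ (y i * y (3 * n + i)%nat) + / (y (n + i)%nat * y (2 * n + i)%nat))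
     + (2 * Z3) * (/ (y i * y (2 * n + i)%nat) + / (y (n + i)%nat * y (3 * n + i)%nat))
     + (- 4 * rho * Sp0))).
  - rewrite S1_lin. unfold Sp0. rewrite Sp_unfold. fold Z1 Z2 Z3. unfold Sg1, Sg2, Sg3, Sigma1, Sigma2, Sigma3, sum1.
    fold (S1 (fun i => / (y i * y (n + i)%nat) + / (y (2 * n + i)%nat * y (3 * n + i)%nat)) n).
    fold (S1 (fun i => / (y i * y (3 * n + i)%nat) + / (y (n + i)%nat * y (2 * n + i)%nat)) n).
    fold (S1 (fun i => / (y i * y (2 * n + i)%nat) + / (y (n + i)%nat * y (3 * n + i)%nat)) n).
    ring.
  - intros i Hi. unfold f.
    rewrite Fq_1, Fq_2, Fq_3, Fq_4 by auto. fold Sp0 Z1 Z2 Z3.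
    assert (y i <> 0) by (apply Rgt_not_eq, Hy; lia).
    assert (y (n + i)%nat <> 0) by (apply Rgt_not_eq, Hy; lia).
    assert (y (2 * n + i)%nat <> 0) by (apply Rgt_not_eq, Hy; lia).
    assert (y (3 * n + i)%nat <> 0) by (apply Rgt_not_eq, Hy; lia).
    field. auto.
Qed.

Lemma inv2_pos a b : 0 < a -> 0 < b -> 0 <= / (a * b).
Proof. intros; apply Rlt_le, Rinv_0_lt_compat, Rmult_lt_0_compat; auto. Qed.

Lemma inv2_le a b a' b' : 0 < a' <= a -> 0 < b' <= b -> / (a * b) <= / (a' * b').
Proof. intros; apply Rinv_le_contravar. apply Rmult_lt_0_compat; lra. apply Rmult_le_compat; lra. Qed.

Section Pos.
Variables (n : nat) (y w : nat -> R).
Hypothesis Hy : forall b, (1 <= b <= 4 * n + 3)%nat -> 0 < y b.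

Lemma Sg1_nn : 0 <= Sg1 n y.
Proof. unfold Sg1, Sigma1, sum1. apply S1_nonneg. intros i Hi. apply Rplus_le_le_0_compat; apply inv2_pos; apply Hy; lia. Qed.
Lemma Sg2_nn : 0 <= Sg2 n y.
Proof. unfold Sg2, Sigma2, sum1. apply S1_nonneg. intros i Hi. apply Rplus_le_le_0_compat; apply inv2_pos; apply Hy; lia. Qed.
Lemma Sg3_nn : 0 <= Sg3 n y.
Proof. unfold Sg3, Sigma3, sum1. apply S1_nonneg. intros i Hi. apply Rplus_le_le_0_compat; apply inv2_pos; apply Hy; lia. Qed.
Lemma Sp_nn : 0 <= Sp n y.
Proof.
  rewrite Sp_unfold. pose proof Sg1_nn. pose proof Sg2_nn. pose proof Sg3_nn.
  assert (0 < y (4 * n + 1)%nat) by (apply Hy; lia).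
  assert (0 < y (4 * n + 2)%nat) by (apply Hy; lia).
  assert (0 < y (4 * n + 3)%nat) by (apply Hy; lia).
  repeat apply Rplus_le_le_0_compat; apply Rmult_le_pos; lra.
Qed.

Hypothesis Hw : forall b, (1 <= b <= 4 * n)%nat -> 0 < w b <= y b.
Lemma Sg1_mono : Sg1 n y <= Sg1 n w.
Proof. unfold Sg1, Sigma1, sum1. apply S1_le. intros i Hi. apply Rplus_le_compat; apply inv2_le; apply Hw; lia. Qed.
Lemma Sg2_mono : Sg2 n y <= Sg2 n w.
Proof. unfold Sg2, Sigma2, sum1. apply S1_le. intros i Hi. apply Rplus_le_compat; apply inv2_le; apply Hw; lia. Qed.
Lemma Sg3_mono : Sg3 n y <= Sg3 n w.
Proof. unfold Sg3, Sigma3, sum1. apply S1_le. intros i Hi. apply Rplus_le_compat; apply inv2_le; apply Hw; lia. Qed.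
End Pos.

Lemma Fq_X_nn n rho y b : rho <= 0 -> (forall b, (1 <= b <= 4 * n + 3)%nat -> 0 < y b) ->
  (1 <= b <= 4 * n)%nat -> 0 <= Fq n rho b y.
Proof.
  intros Hr Hy Hb. pose proof (Sp_nn n y Hy) as HS.
  assert (Hq : forall i j, (1 <= i <= 4 * n + 3)%nat -> (1 <= j <= 4 * n + 3)%nat -> 0 <= y i / y j).
  { intros. apply Rlt_le, Rdiv_lt_0_compat; apply Hy; auto. }
  assert (Hm : forall i, (1 <= i <= 4 * n + 3)%nat -> 0 <= - rho * y i * Sp n y).
  { intros. apply Rmult_le_pos; auto. apply Rmult_le_pos. lra. apply Rlt_le, Hy; auto. }
  destruct (idx_cases n b ltac:(lia)) as [Hi|[(i & Hi & ->)|[(i & Hi & ->)|[(i & Hi & ->)|[->|[->| ->]]]]]]; try lia.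
  - rewrite Fq_1 by auto.
    pose proof (Hq (4 * n + 1)%nat (n + b)%nat ltac:(lia) ltac:(lia)).
    pose proof (Hq (4 * n + 3)%nat (2 * n + b)%nat ltac:(lia) ltac:(lia)).
    pose proof (Hq (4 * n + 2)%nat (3 * n + b)%nat ltac:(lia) ltac:(lia)).
    pose proof (Hm b ltac:(lia)). lra.
  - rewrite Fq_2 by auto.
    pose proof (Hq (4 * n + 1)%nat i ltac:(lia) ltac:(lia)).
    pose proof (Hq (4 * n + 2)%nat (2 * n + i)%nat ltac:(lia) ltac:(lia)).
    pose proof (Hq (4 * n + 3)%nat (3 * n + i)%nat ltac:(lia) ltac:(lia)).
    pose proof (Hm (n + i)%nat ltac:(lia)). lra.
  - rewrite Fq_3 by auto.
    pose proof (Hq (4 * n + 3)%nat i ltac:(lia) ltac:(lia)).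
    pose proof (Hq (4 * n + 2)%nat (n + i)%nat ltac:(lia) ltac:(lia)).
    pose proof (Hq (4 * n + 1)%nat (3 * n + i)%nat ltac:(lia) ltac:(lia)).
    pose proof (Hm (2 * n + i)%nat ltac:(lia)). lra.
  - rewrite Fq_4 by auto.
    pose proof (Hq (4 * n + 2)%nat i ltac:(lia) ltac:(lia)).
    pose proof (Hq (4 * n + 3)%nat (n + i)%nat ltac:(lia) ltac:(lia)).
    pose proof (Hq (4 * n + 1)%nat (2 * n + i)%nat ltac:(lia) ltac:(lia)).
    pose proof (Hm (3 * n + i)%nat ltac:(lia)). lra.
Qed.

Lemma part_b (n : nat) (rho : R) (T : Rbar) (g : nat -> R -> R) :
  (1 <= n)%nat -> QnRB_solution n rho T g ->
  (rho < 0 -> T = p_infty ->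
   forall k : nat, (1 <= k <= 3)%nat ->
     is_lim (fun t => RInt (g (4 * n + k)%nat) 0 t) p_infty p_infty).
Proof.
  intros Hn (Hpos & Hrc & Hode) Hr HT k Hk. subst T.
  assert (Hp : forall b s, (1 <= b <= 4 * n + 3)%nat -> 0 <= s -> 0 < g b s).
  { intros; apply Hpos; simpl; auto. }
  assert (Hode' : forall s, 0 < s -> QnRB_ODE n rho g s) by (intros; apply Hode; simpl; auto).
  assert (HX : forall b s, (1 <= b <= 4 * n)%nat -> 0 <= s -> g b 0 <= g b s).
  { intros b s Hb Hs. rewrite <- (ext0_pos (g b) 0), <- (ext0_pos (g b) s) by lra.
    apply mono_up; auto.
    - intros x Hx. apply cont_ext0; [lra|apply Hrc; lia|].
      intros r Hr0. eexists. apply ODE_F; [apply Hode'; auto|lia].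
    - intros x Hx. exists (Fq n rho b (fun b0 => g b0 x)). split.
      + apply ext0_D; [lra|]. apply ODE_F; [apply Hode'; lra|lia].
      + apply Fq_X_nn; [lra| |lia]. intros; apply Hp; auto; lra. }
  assert (Hyp : forall s, 0 <= s -> forall b, (1 <= b <= 4 * n + 3)%nat -> 0 < (fun b0 => g b0 s) b).
  { intros; apply Hp; auto. }
  assert (Hw : forall s, 0 <= s -> forall b, (1 <= b <= 4 * n)%nat -> 0 < (fun b0 => g b0 0) b <= (fun b0 => g b0 s) b).
  { intros s Hs b Hb; simpl; split; [apply Hp; [lia|lra]|apply HX; auto]. }
  assert (HSB : forall s, 0 < s ->
     0 <= Sg1 n (fun b => g b s) /\ 0 <= Sg2 n (fun b => g b s) /\ 0 <= Sg3 n (fun b => g b s) /\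
     Sg1 n (fun b => g b s) <= Sg1 n (fun b => g b 0) /\ Sg2 n (fun b => g b s) <= Sg2 n (fun b => g b 0) /\
     Sg3 n (fun b => g b s) <= Sg3 n (fun b => g b 0) /\
     0 < g (4 * n + 1)%nat s /\ 0 < g (4 * n + 2)%nat s /\ 0 < g (4 * n + 3)%nat s).
  { intros s Hs.
    assert (Y := Hyp s ltac:(lra)). assert (Y0 := Hyp 0 ltac:(lra)). assert (W := Hw s ltac:(lra)).
    split; [apply Sg1_nn; exact Y|]. split; [apply Sg2_nn; exact Y|]. split; [apply Sg3_nn; exact Y|].
    split; [apply Sg1_mono; exact W|]. split; [apply Sg2_mono; exact W|]. split; [apply Sg3_mono; exact W|].
    split; [apply Hp; lia || lra|]. split; apply Hp; lia || lra. }
  assert (Hk' : k = 1%nat \/ k = 2%nat \/ k = 3%nat) by lia.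
  destruct Hk' as [->|[->| ->]].
  - apply (intZ (g (4 * n + 1)%nat) (fun s => Sigma1 n g s) (fun s => Sigmap n g s) rho (Sigma1 n g 0)).
    + lra.
    + change (Sigma1 n g 0) with (Sg1 n (fun b => g b 0)). apply Sg1_nn. apply Hyp; lra.
    + intros; apply Hp; lia || lra.
    + apply Hrc; lia.
    + intros s Hs. apply (Hode' s Hs).
    + intros s Hs. destruct (HSB s Hs) as (h1 & h2 & h3 & h4 & h5 & h6 & z1 & z2 & z3).
      change (Sigma1 n g s) with (Sg1 n (fun b => g b s)). change (Sigma1 n g 0) with (Sg1 n (fun b => g b 0)).
      change (Sigmap n g s) with (Sp n (fun b => g b s)). rewrite Sp_unfold.
      split; [lra|]. assert (0 <= g (4 * n + 2)%nat s * Sg2 n (fun b => g b s)) by (apply Rmult_le_pos; lra).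
      assert (0 <= g (4 * n + 3)%nat s * Sg3 n (fun b => g b s)) by (apply Rmult_le_pos; lra). lra.
  - apply (intZ (g (4 * n + 2)%nat) (fun s => Sigma2 n g s) (fun s => Sigmap n g s) rho (Sigma2 n g 0)).
    + lra.
    + change (Sigma2 n g 0) with (Sg2 n (fun b => g b 0)). apply Sg2_nn. apply Hyp; lra.
    + intros; apply Hp; lia || lra.
    + apply Hrc; lia.
    + intros s Hs. apply (Hode' s Hs).
    + intros s Hs. destruct (HSB s Hs) as (h1 & h2 & h3 & h4 & h5 & h6 & z1 & z2 & z3).
      change (Sigma2 n g s) with (Sg2 n (fun b => g b s)). change (Sigma2 n g 0) with (Sg2 n (fun b => g b 0)).
      change (Sigmap n g s) with (Sp n (fun b => g b s)). rewrite Sp_unfold.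
      split; [lra|]. assert (0 <= g (4 * n + 1)%nat s * Sg1 n (fun b => g b s)) by (apply Rmult_le_pos; lra).
      assert (0 <= g (4 * n + 3)%nat s * Sg3 n (fun b => g b s)) by (apply Rmult_le_pos; lra). lra.
  - apply (intZ (g (4 * n + 3)%nat) (fun s => Sigma3 n g s) (fun s => Sigmap n g s) rho (Sigma3 n g 0)).
    + lra.
    + change (Sigma3 n g 0) with (Sg3 n (fun b => g b 0)). apply Sg3_nn. apply Hyp; lra.
    + intros; apply Hp; lia || lra.
    + apply Hrc; lia.
    + intros s Hs. apply (Hode' s Hs).
    + intros s Hs. destruct (HSB s Hs) as (h1 & h2 & h3 & h4 & h5 & h6 & z1 & z2 & z3).
      change (Sigma3 n g s) with (Sg3 n (fun b => g b s)). change (Sigma3 n g 0) with (Sg3 n (fun b => g b 0)).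
      change (Sigmap n g s) with (Sp n (fun b => g b s)). rewrite Sp_unfold.
      split; [lra|]. assert (0 <= g (4 * n + 1)%nat s * Sg1 n (fun b => g b s)) by (apply Rmult_le_pos; lra).
      assert (0 <= g (4 * n + 2)%nat s * Sg2 n (fun b => g b s)) by (apply Rmult_le_pos; lra). lra.
Qed.

Lemma part_a (n : nat) (rho : R) (T : Rbar) (g : nat -> R -> R) :
  (1 <= n)%nat -> QnRB_solution n rho T g ->
  (1 + 3 * rho <> 0 ->
   forall t : R, 0 < t -> Rbar_lt t T ->
     is_derive (QnRB_invariant n rho g) t 0).
Proof.
  intros Hn (Hpos & _ & Hode) Hr t Ht HtT.
  set (y := fun b => g b t).
  assert (Hy : forall b, (1 <= b <= 4 * n + 3)%nat -> 0 < y b) by (intros; apply Hpos; auto; lra).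
  assert (HD : forall a, (1 <= a <= 4 * n + 3)%nat -> is_derive (g a) t (Fq n rho a y)).
  { apply ODE_F; auto. }
  set (e := 2 * (1 - 2 * INR n * rho) / (1 + 3 * rho)).
  set (Pi := fun s => g (4 * n + 1)%nat s * g (4 * n + 2)%nat s * g (4 * n + 3)%nat s).
  assert (HPi : 0 < Pi t).
  { unfold Pi. repeat apply Rmult_lt_0_compat; apply Hpos; auto; lia || lra. }
  unfold QnRB_invariant, Rpower. fold e.
  eapply D_eq.
  - apply (D_mult (fun s => prod1 (fun a => g a s) (4 * n)) (fun s => exp (e * ln (Pi s)))).
    + apply (prod_deriv g (fun a => Fq n rho a y)). intros a Ha. split. apply HD; lia. apply Hy; lia.
    + apply (D_exp (fun s => e * ln (Pi s))). apply is_derive_scal. apply (D_ln Pi); auto.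
      unfold Pi. apply (D_mult (fun s => g (4 * n + 1)%nat s * g (4 * n + 2)%nat s) (g (4 * n + 3)%nat)).
      apply (D_mult (g (4 * n + 1)%nat) (g (4 * n + 2)%nat)).
      1-3: apply HD; lia.
  - change (S1 (fun a => Fq n rho a y / g a t) (4 * n)) with (S1 (fun a => Fq n rho a y / y a) (4 * n)).
    rewrite logsum by auto.
    rewrite Fq_5, Fq_6, Fq_7, Sp_unfold. unfold Pi in *. fold y.
    change (g (4 * n + 1)%nat t) with (y (4 * n + 1)%nat) in *.
    change (g (4 * n + 2)%nat t) with (y (4 * n + 2)%nat) in *.
    change (g (4 * n + 3)%nat t) with (y (4 * n + 3)%nat) in *.
    assert (0 < y (4 * n + 1)%nat) by (apply Hy; lia).
    assert (0 < y (4 * n + 2)%nat) by (apply Hy; lia).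
    assert (0 < y (4 * n + 3)%nat) by (apply Hy; lia).
    unfold e. field. repeat split; auto; lra.
Qed.

Theorem theorem2p7 (n : nat) (rho : R) (T : Rbar) (g : nat -> R -> R) :
  (1 <= n)%nat ->
  Rbar_lt 0 T ->
  QnRB_solution n rho T g ->
  (* (a) *)
  (1 + 3 * rho <> 0 ->
   forall t : R, 0 < t -> Rbar_lt t T ->
     is_derive (QnRB_invariant n rho g) t 0) /\
  (* (b) *)
  (rho < 0 -> T = p_infty ->
   forall k : nat, (1 <= k <= 3)%nat ->
     is_lim (fun t => RInt (g (4 * n + k)%nat) 0 t) p_infty p_infty) /\
  (* (c) *)
  (6 + 2 * INR n - 6 * INR n * rho <> 0 ->
   (forall j : nat, (1 <= j <= 4 * n)%nat -> g j 0 = g 1%nat 0) ->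
   g (4 * n + 2)%nat 0 = g (4 * n + 1)%nat 0 ->
   g (4 * n + 3)%nat 0 = g (4 * n + 1)%nat 0 ->
   let c := g (4 * n + 1)%nat 0 / (g 1%nat 0) ^ 2
            * (6 + 2 * INR n - 6 * INR n * rho) in
   forall t : R, 0 <= t -> Rbar_lt t T -> 0 < 1 + c * t ->
     (forall j : nat, (1 <= j <= 4 * n)%nat ->
        g j t = g 1%nat 0 * Rpower (1 + c * t)
          (3 * (1 - 2 * INR n * rho) / (6 + 2 * INR n - 6 * INR n * rho))) /\
     (forall k : nat, (1 <= k <= 3)%nat ->
        g (4 * n + k)%nat t = g (4 * n + 1)%nat 0 * Rpower (1 + c * t)
          (- INR n * (1 + 3 * rho) / (3 + INR n - 3 * INR n * rho)))).
Proof.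
  intros Hn HT Hs. split; [|split].
  - intros Hr t Ht HtT. exact (part_a n rho T g Hn Hs Hr t Ht HtT).
  - exact (part_b n rho T g Hn Hs).
  - exact (part_c n rho T g Hn Hs).
Qed.
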